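(* Let $(X,\overline{x},\delta)$ be a pointed automaton over $\Sigma$. For $x\in X$ let $\nu\mathrm{C}(x,\delta)$ denote $\nu\mathrm{C}(X,x,\delta)$ and let $\mathsf{free}(X,\delta)$ be as in the context. (1) If every state of $X$ is reachable from $\overline{x}$, then $\mathsf{free}(X,\delta)\cong\nu\mathrm{C}(\overline{x},\delta)$. (2) $\mathsf{free}(X,\delta)\cong\prod_{x\in X}\nu\mathrm{C}(x,\delta)$, where the product is taken in $\mathrm{Alg}_r(G_1)$.
   Context: $\Sigma$ is a finite alphabet, $\Sigma^\ast$ the free monoid with empty word $\epsilon$. A pointed automaton is $(X,\overline{x},\delta)$ with $\overline{x}\in X$, $\delta:X\to X^\Sigma$, extended to words by $\delta(x)(\epsilon)=x$, $\delta(x)(wa)=\delta(\delta(x)(w))(a)$; it is reachable if every state is $\delta(\overline{x})(u)$ for some $u$. Morphisms preserve initial states and commute with transitions; $\mathrm{Alg}_r(G_1)$ is the category of reachable pointed automata (it is a preorder, and the product of a family in it is the reachable part, from the tuple of initial states, of the componentwise product automaton). For a state $y$, $\langle y\rangle=\{\delta(y)(u)\mid u\in\Sigma^\ast\}$. For a congruence $C$ on $\Sigma^\ast$, let $Q(C)$ be the pointed automaton $(\Sigma^\ast/C,[\epsilon]_C,\sigma)$ with $\sigma([w]_C)(a)=[wa]_C$. Define $\nu\mathrm{C}(X,\overline{x},\delta)=Q(\sim_{\overline{x}})$ where $u\sim_{\overline{x}}v$ iff $\delta(y)(u)=\delta(y)(v)$ for all $y\in\langle\overline{x}\rangle$ (the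 kernel of the transition monoid map of the reachable part). Define $\mathsf{free}(X,\delta)=Q(\ker\delta^\sharp)$ where $(u,v)\in\ker\delta^\sharp$ iff $\delta(x)(u)=\delta(x)(v)$ for all $x\in X$ ($\ker\delta^\sharp$ is the largest set of equations satisfied by $(X,\delta)$). *)

(* Defs.v *)
From mathcomp Require Import all_boot.
From Stdlib Require Import ClassicalEpsilon FunctionalExtensionality.
Set Implicit Arguments. Unset Strict Implicit. Unset Printing Implicit Defensive.

Record pautom (Sigma : Type) := PAut {
  pst :> Type;
  pinit : pst;
  ptr : pst -> Sigma -> pst }.
Arguments PAut {Sigma}.

Definition run (Sigma X : Type) (d : X -> Sigma -> X) (x : X) (w : seq Sigma) : X :=
  foldl d x w.

Lemma run_rcons (Sigma X : Type) (d : X -> Sigma -> X) x w a :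
  run d x (rcons w a) = d (run d x w) a.
Proof. by rewrite /run -cats1 foldl_cat. Qed.

Definition reach_from (Sigma X : Type) (d : X -> Sigma -> X) (y z : X) : Prop :=
  exists u, z = run d y u.

Definition reachable (Sigma : Type) (A : pautom Sigma) : Prop :=
  forall y : A, reach_from (@ptr _ A) (pinit A) y.

Definition pmorph (Sigma : Type) (A B : pautom Sigma) (f : A -> B) : Prop :=
  f (pinit A) = pinit B /\ forall (x : A) (a : Sigma), f (ptr x a) = ptr (f x) a.

Definition piso (Sigma : Type) (A B : pautom Sigma) : Prop :=
  exists (f : A -> B) (g : B -> A),
    [/\ pmorph f, pmorph g, cancel f g & cancel g f].

(* Q(C): quotient automaton Sigma^*/C, states are the C-classes [w]_C (as predicates),
   initial state [eps]_C, transition [w]_C --a--> [wa]_C (computed on a chosen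
   representative; well defined when C is a congruence). *)
Definition Qst (Sigma : Type) (C : seq Sigma -> seq Sigma -> Prop) : Type :=
  {A : seq Sigma -> Prop | exists w, A = C w}.

Definition Qcls (Sigma : Type) (C : seq Sigma -> seq Sigma -> Prop) (w : seq Sigma)
  : Qst C := exist _ (C w) (ex_intro _ w erefl).

Definition Qrep (Sigma : Type) (C : seq Sigma -> seq Sigma -> Prop) (A : Qst C)
  : seq Sigma := proj1_sig (constructive_indefinite_description _ (proj2_sig A)).

Definition Q (Sigma : Type) (C : seq Sigma -> seq Sigma -> Prop) : pautom Sigma :=
  PAut (Qst C) (Qcls C [::]) (fun A a => Qcls C (rcons (Qrep A) a)).

Definition simx (Sigma X : Type) (d : X -> Sigma -> X) (x : X) (u v : seq Sigma) : Prop :=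
  forall y, reach_from d x y -> run d y u = run d y v.

Definition kerd (Sigma X : Type) (d : X -> Sigma -> X) (u v : seq Sigma) : Prop :=
  forall x, run d x u = run d x v.

Definition nuC (Sigma X : Type) (x : X) (d : X -> Sigma -> X) : pautom Sigma :=
  Q (simx d x).

Definition free (Sigma X : Type) (d : X -> Sigma -> X) : pautom Sigma :=
  Q (kerd d).

(* Product in Alg_r(G_1): reachable part, from the tuple of initial states,
   of the componentwise product automaton. *)
Definition prodst (Sigma I : Type) (Y : I -> pautom Sigma) : Type :=
  {f : forall i, Y i | exists u, f = fun i => run (@ptr _ (Y i)) (pinit (Y i)) u}.

Lemma prodst_step (Sigma I : Type) (Y : I -> pautom Sigma) (f : prodst Y) (a : Sigma) :
  exists u, (fun i => ptr (proj1_sig f i) a)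
            = fun i => run (@ptr _ (Y i)) (pinit (Y i)) u.
Proof.
case: f => f [u Hf] /=; exists (rcons u a); subst f.
by apply: functional_extensionality_dep => i; rewrite run_rcons.
Qed.

Definition prod_r (Sigma I : Type) (Y : I -> pautom Sigma) : pautom Sigma :=
  PAut (prodst Y)
    (exist _ (fun i => pinit (Y i)) (ex_intro _ [::] erefl))
    (fun f a => exist _ (fun i => ptr (proj1_sig f i) a) (prodst_step f a)).

(* Main.v *)
Require Import Defs.
From mathcomp Require Import all_boot.
From Stdlib Require Import ClassicalEpsilon FunctionalExtensionality PropExtensionality ProofIrrelevance.
Set Implicit Arguments. Unset Strict Implicit.

Section Gen.
Variable Sigma : Type.

Lemma gen_iso (A B : pautom Sigma) (eA : seq Sigma -> A) (eB : seq Sigma -> B) :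
  (forall a, exists u, a = eA u) -> (forall b, exists u, b = eB u) ->
  (forall u v, eA u = eA v <-> eB u = eB v) ->
  eA [::] = pinit A -> eB [::] = pinit B ->
  (forall u a, ptr (eA u) a = eA (rcons u a)) ->
  (forall u a, ptr (eB u) a = eB (rcons u a)) -> piso A B.
Proof.
move=> sA sB E iA iB tA tB.
pose rA := fun a => proj1_sig (constructive_indefinite_description _ (sA a)).
have rAP : forall a, a = eA (rA a) by move=> a; rewrite /rA; case: constructive_indefinite_description.
pose rB := fun b => proj1_sig (constructive_indefinite_description _ (sB b)).
have rBP : forall b, b = eB (rB b) by move=> b; rewrite /rB; case: constructive_indefinite_description.
pose f := fun a => eB (rA a). pose g := fun b => eA (rB b).
have fE : forall u, f (eA u) = eB u.
  by move=> u; apply/E; rewrite -rAP.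
have gE : forall u, g (eB u) = eA u.
  by move=> u; apply/E; rewrite -rBP.
exists f, g; split.
- split; first by rewrite -iA fE.
  by move=> x a; rewrite (rAP x) tA !fE tB.
- split; first by rewrite -iB gE.
  by move=> x a; rewrite (rBP x) tB !gE tA.
- by move=> x; rewrite (rAP x) fE gE.
- by move=> x; rewrite (rBP x) gE fE.
Qed.

Lemma run_e (A : pautom Sigma) (eA : seq Sigma -> A) :
  eA [::] = pinit A -> (forall u a, ptr (eA u) a = eA (rcons u a)) ->
  forall u, run (@ptr _ A) (pinit A) u = eA u.
Proof.
move=> i t; elim/last_ind => [|u a IH]; first by rewrite i.
by rewrite run_rcons IH t.
Qed.

Definition congr (C : seq Sigma -> seq Sigma -> Prop) :=
  [/\ forall u, C u u, forall u v, C u v -> C v u,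
      forall u v w, C u v -> C v w -> C u w &
      forall u v a, C u v -> C (rcons u a) (rcons v a)].

Lemma Qcls_eq (C : seq Sigma -> seq Sigma -> Prop) : congr C -> forall u v, Qcls C u = Qcls C v <-> C u v.
Proof.
case=> r s t _ u v; split.
  move=> /(f_equal (@proj1_sig _ _)) /= ->; exact: r.
move=> Huv; apply: eq_sig_hprop => /=; first by move=> *; apply: proof_irrelevance.
apply: functional_extensionality => w; apply: propositional_extensionality.
split=> H; [exact: t (s _ _ Huv) H | exact: t Huv H].
Qed.

Lemma Qsurj (C : seq Sigma -> seq Sigma -> Prop) (A : Qst C) : exists u, A = Qcls C u.
Proof.
case: A => A [w Hw]; exists w; apply: eq_sig_hprop => //=.
by move=> *; apply: proof_irrelevance.
Qed.

Lemma Qtr (C : seq Sigma -> seq Sigma -> Prop) : congr C -> forall u a, @ptr _ (Q C) (Qcls C u) a = Qcls C (rcons u a).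
Proof.
move=> hC u a /=; apply/(Qcls_eq hC).
have hC' := hC; case: hC' => r s t c; apply: c.
have : Qcls C u = Qcls C (Qrep (Qcls C u)).
  rewrite /Qrep; case: constructive_indefinite_description => w /= Hw.
  by apply: eq_sig_hprop => //= *; apply: proof_irrelevance.
by move/(Qcls_eq hC); apply: s.
Qed.

Definition eP I (Y : I -> pautom Sigma) (u : seq Sigma) : prod_r Y :=
  exist _ (fun i => run (@ptr _ (Y i)) (pinit (Y i)) u) (ex_intro _ u erefl).

Lemma eP_surj I (Y : I -> pautom Sigma) (p : prod_r Y) : exists u, p = eP Y u.
Proof.
case: p => p [u Hu]; exists u; apply: eq_sig_hprop => //= *; exact: proof_irrelevance.
Qed.

Lemma eP_tr I (Y : I -> pautom Sigma) u a : ptr (eP Y u) a = eP Y (rcons u a).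
Proof.
apply: eq_sig_hprop => /=; first by move=> *; exact: proof_irrelevance.
apply: functional_extensionality_dep => i; by rewrite run_rcons.
Qed.

Lemma eP_eq I (Y : I -> pautom Sigma) u v :
  eP Y u = eP Y v <-> forall i, run (@ptr _ (Y i)) (pinit (Y i)) u = run (@ptr _ (Y i)) (pinit (Y i)) v.
Proof.
split; first by move=> /(f_equal (@proj1_sig _ _)) /= H i; rewrite (equal_f_dep H i).
move=> H; apply: eq_sig_hprop => /=; first by move=> *; exact: proof_irrelevance.
exact: functional_extensionality_dep.
Qed.

End Gen.

Lemma simx_congr (Sigma X : Type) (d : X -> Sigma -> X) x : congr (simx d x).
Proof.
split.
- by [].
- by move=> u v H y Hy; rewrite H.
- by move=> u v w H1 H2 y Hy; rewrite H1 // H2.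
- by move=> u v a H y Hy; rewrite !run_rcons H.
Qed.

Lemma kerd_congr (Sigma X : Type) (d : X -> Sigma -> X) : congr (kerd d).
Proof.
split.
- by [].
- by move=> u v H y; rewrite H.
- by move=> u v w H1 H2 y; rewrite H1 H2.
- by move=> u v a H y; rewrite !run_rcons H.
Qed.

Theorem mainTheorem4 (Sigma : finType) (X : Type) (xbar : X) (d : X -> Sigma -> X) :
  ((forall y : X, reach_from d xbar y) -> piso (free d) (nuC xbar d)) /\
  piso (free d) (prod_r (fun x : X => nuC x d)).
Proof.
split.
- move=> R.
  apply: (@gen_iso _ (free d) (nuC xbar d) (Qcls (kerd d)) (Qcls (simx d xbar))).
  + exact: Qsurj.
  + exact: Qsurj.
  + move=> u v; rewrite (Qcls_eq (kerd_congr d)) (Qcls_eq (simx_congr d xbar)).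
    split; first by move=> H y _.
    by move=> H y; apply: H.
  + by [].
  + by [].
  + exact: Qtr (kerd_congr d).
  + exact: Qtr (simx_congr d xbar).
- apply: (@gen_iso _ (free d) _ (Qcls (kerd d)) (eP (fun x : X => nuC x d))).
  + exact: Qsurj.
  + exact: eP_surj.
  + move=> u v; rewrite (Qcls_eq (kerd_congr d)) eP_eq.
    have RE : forall x w, run (@ptr _ (nuC x d)) (pinit (nuC x d)) w = Qcls (simx d x) w.
      move=> x; apply: run_e => //; exact: Qtr (simx_congr d x).
    split.
    * move=> H x; rewrite !RE; apply/(Qcls_eq (simx_congr d x)) => y _; exact: H.
    * move=> H x; move: (H x); rewrite !RE => /(Qcls_eq (simx_congr d x)) H2.
      apply: H2; by exists [::].
  + by [].
  + by [].
  + exact: Qtr (kerd_congr d).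
  + exact: eP_tr.
Qed.
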